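(* Let $\mathfrak{A}$ be a finite-dimensional alternative $\mathbb{Q}$-algebra with radical $\mathfrak{R}$, so that $\mathfrak{A}\cong\mathfrak{S}\oplus\mathfrak{R}$ with $\mathfrak{S}$ a semisimple subalgebra. If $\mathfrak{A}$ has the hyperbolic property, then $\mathfrak{R}$ is $2$-nilpotent (i.e. $\mathfrak{R}^2=0$), and there exists $j_0\in\mathfrak{R}$ with $j_0^2=0$ such that $\mathfrak{R}=\mathbb{Q}j_0$ is the $\mathbb{Q}$-linear span of $j_0$.
   Context: An algebra is alternative if $(xx)y=x(xy)$ and $(yx)x=y(xx)$ for all $x,y$. A $\mathbb{Z}$-order of a finite-dimensional $\mathbb{Q}$-algebra $\mathfrak{A}$ is a unital subring $\Gamma$ that is finitely generated as a $\mathbb{Z}$-module and spans $\mathfrak{A}$ over $\mathbb{Q}$; its units (elements with a two-sided inverse in $\Gamma$) form a loop $\mathcal{U}(\Gamma)$ under multiplication. A loop has the hyperbolic property if it contains no subgroup isomorphic to the free abelian group $\mathbb{Z}^2$ of rank two. The algebra $\mathfrak{A}$ has the hyperbolic property if there exists a $\mathbb{Z}$-order $\Gamma\subset\mathfrak{A}$ whose unit loop $\mathcal{U}(\Gamma)$ has the hyperbolic property. *)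

(* Defs.v *)
(* Finite-dimensional (unital, nonassociative) Q-algebras are
   modelled as a finite-dimensional Q-vector space V (vectType rat) with a
   bilinear multiplication mul and an identity element one. *)
From HB Require Import structures.
From mathcomp Require Import all_boot all_order all_algebra.
Set Implicit Arguments.
Unset Strict Implicit.
Unset Printing Implicit Defensive.
Import GRing.Theory.
Local Open Scope ring_scope.

Section NonassocAlgebra.
Variables (V : vectType rat) (mul : V -> V -> V) (one : V).

Definition bilinear_mul : Prop :=
  (forall (a : rat) (x y z : V), mul (a *: x + y) z = a *: mul x z + mul y z) /\
  (forall (a : rat) (x y z : V), mul z (a *: x + y) = a *: mul z x + mul z y).

Definition unital_mul : Prop := forall x : V, mul one x = x /\ mul x one = x.

Definition alternative_mul : Prop :=
  forall x y : V, mul (mul x x) y = mul x (mul x y) /\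
                  mul (mul y x) x = mul y (mul x x).

Definition is_ideal (I : V -> Prop) : Prop :=
  I 0 /\ (forall (a : rat) (x y : V), I x -> I y -> I (a *: x + y)) /\
  (forall a x : V, I x -> I (mul a x) /\ I (mul x a)).

Inductive ideal_prod (I : V -> Prop) : nat -> V -> Prop :=
  | ip_base x : I x -> ideal_prod I 1 x
  | ip_mul i j x y : ideal_prod I i x -> ideal_prod I j y ->
                     ideal_prod I (i + j) (mul x y).

(* nilpotent ideal: I^n = 0 for some n >= 1, where I^n is spanned by all
   products of n elements of I (in all bracketings) *)
Definition nilpotent_ideal (I : V -> Prop) : Prop :=
  is_ideal I /\ exists n : nat, (0 < n)%N /\ forall x, ideal_prod I n x -> x = 0.

(* the (nilpotent) radical: union of all nilpotent ideals, which in a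
   finite-dimensional alternative algebra is the largest nilpotent ideal *)
Definition in_radical (x : V) : Prop :=
  exists I : V -> Prop, nilpotent_ideal I /\ I x.

Definition Z_order (G : V -> Prop) : Prop :=
  G one /\ (forall x y, G x -> G y -> G (x - y) /\ G (mul x y)) /\
  exists s : seq V,
    (forall v, G v <-> exists z : 'I_(size s) -> int,
                         v = \sum_(i < size s) s`_i *~ z i) /\
    (<<s>>%VS = fullv).

Definition unit_of_order (G : V -> Prop) (u : V) : Prop :=
  G u /\ exists v, G v /\ mul u v = one /\ mul v u = one.

(* the unit loop of G contains no subgroup isomorphic to Z^2, i.e. there is
   no injective homomorphism Z^2 -> U(G) *)
Definition loop_hyperbolic (G : V -> Prop) : Prop :=
  ~ exists phi : int * int -> V,
      injective phi /\ (forall a, unit_of_order G (phi a)) /\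
      (forall a b : int * int,
         phi (a.1 + b.1, a.2 + b.2) = mul (phi a) (phi b)).

Definition algebra_hyperbolic : Prop :=
  exists G : V -> Prop, Z_order G /\ loop_hyperbolic G.

End NonassocAlgebra.

(* Main.v *)
Require Import Defs.
From HB Require Import structures.
From mathcomp Require Import all_boot all_order all_algebra.
From mathcomp Require Import ring zify.
From Stdlib Require Import Classical.
Set Implicit Arguments. Unset Strict Implicit.
Import GRing.Theory.
Local Open Scope ring_scope.


Section Basics.
Variables (V : vectType rat) (mul : V -> V -> V) (one : V).
Hypothesis hB : bilinear_mul mul.

Lemma mulDl x y z : mul (x + y) z = mul x z + mul y z.
Proof. by have := (proj1 hB) 1 x y z; rewrite !scale1r. Qed.
Lemma mulDr x y z : mul z (x + y) = mul z x + mul z y.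
Proof. by have := (proj2 hB) 1 x y z; rewrite !scale1r. Qed.
Lemma bmul0l z : mul 0 z = 0.
Proof. by apply: (addrI (mul 0 z)); rewrite -mulDl !addr0. Qed.
Lemma bmul0r z : mul z 0 = 0.
Proof. by apply: (addrI (mul z 0)); rewrite -mulDr !addr0. Qed.
Lemma mulZl a x z : mul (a *: x) z = a *: mul x z.
Proof. by have := (proj1 hB) a x 0 z; rewrite !addr0 bmul0l addr0. Qed.
Lemma mulZr a x z : mul z (a *: x) = a *: mul z x.
Proof. by have := (proj2 hB) a x 0 z; rewrite !addr0 bmul0r addr0. Qed.

Definition indep (w z : V) := forall a b : rat, a *: w + b *: z = 0 -> a = 0 /\ b = 0.

Lemma dep_elim w z : ~ indep w z -> exists a b : rat, a *: w + b *: z = 0 /\ (a != 0 \/ b != 0).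
Proof.
move=> H; apply: NNPP => H2; apply: H => a b E.
case: (eqVneq a 0) => [a0|a0]; last by case: H2; exists a, b; split; [|left].
case: (eqVneq b 0) => [b0|b0]; last by case: H2; exists a, b; split; [|right].
by [].
Qed.

Lemma dep_mult w z : z <> 0 -> ~ indep w z -> exists c : rat, w = c *: z.
Proof.
move=> z0 /dep_elim [a [b [E H]]].
case: (eqVneq a 0) => [a0|a0].
  subst a; move: E; rewrite scale0r add0r => /eqP; rewrite scaler_eq0.
  case/orP => /eqP // b0; by move: H; rewrite b0 eqxx; case.
exists (- b / a); apply: (scalerI a0); rewrite scalerA mulrCA mulfV // mulr1 scaleNr.
by apply/eqP; rewrite -addr_eq0 E.
Qed.

End Basics.

Section Ideals.
Variables (V : vectType rat) (mul : V -> V -> V) (I : V -> Prop).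
Hypothesis hI : is_ideal mul I.

Lemma ip_in i x : ideal_prod mul I i x -> I x.
Proof. elim=> // i0 j x0 y _ Hx _ _; exact: (proj2 ((proj2 (proj2 hI)) y x0 Hx)). Qed.

Lemma ip_pos i x : ideal_prod mul I i x -> (0 < i)%N.
Proof. elim=> // i0 j x0 y _ Hx _ _; lia. Qed.

Lemma ip_down m x : ideal_prod mul I m x -> forall k, (0 < k)%N -> (k <= m)%N -> ideal_prod mul I k x.
Proof.
elim=> [x0 Hx0|i j x0 y Hx IHx Hy IHy] k k0 km.
  have -> : k = 1%N by lia.
  by constructor.
have i0 := ip_pos Hx; have j0 := ip_pos Hy.
case: (eqVneq k 1%N) => [->|k1].
  constructor; exact: (proj2 ((proj2 (proj2 hI)) y x0 (ip_in Hx))).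
have -> : k = (minn i k.-1 + (k - minn i k.-1))%N by lia.
apply: ip_mul; [apply: IHx|apply: IHy]; lia.
Qed.

End Ideals.


Section Order.
Variables (V : vectType rat) (mul : V -> V -> V) (one : V) (G : V -> Prop).
Hypothesis hB : bilinear_mul mul.
Hypothesis hU : unital_mul mul one.
Hypothesis hG : Z_order mul one G.

Lemma G1 : G one. Proof. by case: hG. Qed.
Lemma GB x y : G x -> G y -> G (x - y). Proof. by case: hG => _ [h _] Gx Gy; case: (h x y Gx Gy). Qed.
Lemma GM x y : G x -> G y -> G (mul x y). Proof. by case: hG => _ [h _] Gx Gy; case: (h x y Gx Gy). Qed.
Lemma G0 : G 0. Proof. by rewrite -(subrr one); apply: GB; apply: G1. Qed.
Lemma GN x : G x -> G (- x). Proof. by move=> Gx; rewrite -sub0r; apply: GB => //; apply: G0. Qed.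
Lemma GD x y : G x -> G y -> G (x + y).
Proof. by move=> Gx Gy; rewrite -(opprK y); apply: GB => //; apply: GN. Qed.
Lemma GMn x k : G x -> G (x *+ k).
Proof. by move=> Gx; elim: k => [|k IH]; [rewrite mulr0n; apply: G0| rewrite mulrS; apply: GD]. Qed.
Lemma GZ x (n : int) : G x -> G (n%:~R *: x).
Proof.
move=> Gx; rewrite scaler_int; case: n => k.
  exact: GMn.
by rewrite NegzE mulrNz; apply: GN; apply: GMn.
Qed.


Lemma G_sum n (c : 'I_n -> rat) (f : 'I_n -> V) : (forall i, G (f i)) ->
  exists N : int, N != 0 /\ G (N%:~R *: \sum_i c i *: f i).
Proof.
elim: n c f => [|n IH] c f Gf.
  by exists 1; split => //; rewrite big_ord0 scaler0; apply: G0.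
have [N [N0 GN']] := IH (fun i => c (widen_ord (leqnSn n) i)) (fun i => f (widen_ord (leqnSn n) i)) (fun i => Gf _).
exists (N * denq (c ord_max)); split.
  by rewrite mulf_neq0 // denq_neq0.
rewrite big_ord_recr /= scalerDr; apply: GD.
  by rewrite rmorphM /= mulrC -scalerA; apply: GZ.
rewrite scalerA.
have -> : (N * denq (c ord_max))%:~R * c ord_max = (N * numq (c ord_max))%:~R :> rat.
  by rewrite !rmorphM /= numqE; ring.
exact: GZ.
Qed.

Lemma G_scale v : exists N : int, N != 0 /\ G (N%:~R *: v).
Proof.
case: hG => _ [_ [s [Hs Hspan]]].
have vin : v \in <<in_tuple s>>%VS by rewrite Hspan memvf.
rewrite (coord_span vin).
apply: G_sum => i /=.
apply/Hs; exists (fun j => (j == i)%:Z).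
rewrite (bigD1 i) //= eqxx mulr1z big1 ?addr0 // => j /negbTE ->.
by rewrite mulr0z.
Qed.

End Order.


Section Core.
Variables (V : vectType rat) (mul : V -> V -> V) (one : V) (G : V -> Prop).
Hypothesis hB : bilinear_mul mul.
Hypothesis hU : unital_mul mul one.
Hypothesis hG : Z_order mul one G.
Hypothesis hH : loop_hyperbolic mul one G.
Variables (w s z : V) (c : rat).
Hypotheses (Gw : G w) (Gs : G s) (Gz : G z) (ind : indep w z)
  (hww : mul w w = 2%:R *: s) (hs : s = c *: z) (hzz : mul z z = 0)
  (hwz : mul w z = 0) (hzw : mul z w = 0).

Let L (a1 a2 a3 : rat) := a1 *: w + a2 *: s + a3 *: z.

Let hws : mul w s = 0. Proof. by rewrite hs (mulZr hB) hwz scaler0. Qed.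
Let hsw : mul s w = 0. Proof. by rewrite hs (mulZl hB) hzw scaler0. Qed.
Let hsz : mul s z = 0. Proof. by rewrite hs (mulZl hB) hzz scaler0. Qed.
Let hzs : mul z s = 0. Proof. by rewrite hs (mulZr hB) hzz scaler0. Qed.
Let hss : mul s s = 0. Proof. by rewrite {1}hs (mulZl hB) hzs scaler0. Qed.

Let mulL a1 a2 a3 b1 b2 b3 : mul (L a1 a2 a3) (L b1 b2 b3) = L 0 (2%:R * a1 * b1) 0.
Proof.
rewrite /L !(mulDl hB) !(mulZl hB) !(mulDr hB) !(mulZr hB).
rewrite hww hws hwz hsw hss hsz hzw hzs hzz !scaler0 !addr0 !scale0r !add0r !addr0.
rewrite !scaler0 !addr0 !scalerA; congr (_ *: _); ring.
Qed.

Let Ladd a1 a2 a3 b1 b2 b3 : L a1 a2 a3 + L b1 b2 b3 = L (a1 + b1) (a2 + b2) (a3 + b3).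
Proof.
by rewrite /L !scalerDl [LHS]addrACA (addrACA (a1 *: w)).
Qed.

Let Lopp a1 a2 a3 : - L a1 a2 a3 = L (- a1) (- a2) (- a3).
Proof. by rewrite /L !opprD !scaleNr. Qed.

Let Lz a1 a2 a3 : L a1 a2 a3 = 0 -> a1 = 0 /\ a2 * c + a3 = 0.
Proof.
rewrite /L hs scalerA -addrA -scalerDl => /ind [-> ->]; split => //.
Qed.

Definition phi (p : int * int) : V :=
  one + L (p.1)%:~R (p.1 * (p.1 - 1))%:~R (p.2)%:~R.

Let mul1p X Y : mul (one + X) (one + Y) = one + Y + (X + mul X Y).
Proof.
by rewrite (mulDl hB) !(mulDr hB one) (proj1 (hU one)) (proj1 (hU Y)) (proj2 (hU X)).
Qed.

Let phi_hom a b : phi (a.1 + b.1, a.2 + b.2) = mul (phi a) (phi b).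
Proof.
rewrite /phi /= mul1p mulL.
rewrite -[RHS]addrA; congr (_ + _).
rewrite Ladd Ladd /L; congr (_ *: _ + _ *: _ + _ *: _); rewrite ?rmorphD ?rmorphM ?rmorphB /=; ring.
Qed.

Let phi0 : phi (0, 0) = one.
Proof. by rewrite /phi /L /= !mul0r !scale0r !addr0. Qed.

Lemma core_false : False.
Proof.
apply: hH; exists phi; split; last split.
- move=> p q E.
  have : L (p.1)%:~R (p.1 * (p.1 - 1))%:~R (p.2)%:~R + - L (q.1)%:~R (q.1 * (q.1 - 1))%:~R (q.2)%:~R = 0.
    by move: E; rewrite /phi => /addrI ->; rewrite subrr.
  rewrite Lopp Ladd => /Lz [h1 h2].
  move/eqP: h1; rewrite subr_eq0 => /eqP /intr_inj h1.
  move: h2; rewrite h1 subrr mul0r add0r => /eqP; rewrite subr_eq0 => /eqP /intr_inj h2.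
  by case: p q h1 h2 {E} => [p1 p2] [q1 q2] /= -> ->.
- move=> a; split.
    rewrite /phi /L; apply: (GD hG); first exact: (G1 hG).
    by apply: (GD hG); [apply: (GD hG)|]; apply: (GZ hG).
  exists (phi (- a.1, - a.2)); split.
    rewrite /phi /L; apply: (GD hG); first exact: (G1 hG).
    by apply: (GD hG); [apply: (GD hG)|]; apply: (GZ hG).
  by rewrite -phi_hom /= !subrr phi0 -phi_hom /= !addNr phi0.
- by move=> a b; apply: phi_hom.
Qed.

End Core.


Lemma Z2_false (V : vectType rat) (mul : V -> V -> V) (one : V) :
  bilinear_mul mul -> unital_mul mul one -> algebra_hyperbolic mul one ->
  forall w z c, indep w z -> mul w w = c *: z -> mul z z = 0 -> mul w z = 0 -> mul z w = 0 -> False.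
Proof.
move=> hB hU [G [hG hH]] w z c ind hww hzz hwz hzw.
have [N [N0 GNw]] := G_scale hG w.
have [M [M0 GMz]] := G_scale hG z.
have N0' : (N%:~R : rat) != 0 by rewrite intr_eq0.
have M0' : (M%:~R : rat) != 0 by rewrite intr_eq0.
set w1 := (2 : int)%:~R *: (N%:~R *: w).
set s1 := (2 : int)%:~R *: mul (N%:~R *: w) (N%:~R *: w).
set z1 := M%:~R *: z.
apply: (@core_false V mul one G hB hU hG hH w1 s1 z1 (2%:R * N%:~R * N%:~R * c / M%:~R)).
- exact: (GZ hG).
- apply: (GZ hG); exact: (GM hG).
- exact: GMz.
- move=> a b; rewrite /w1 /z1 !scalerA => /ind [h1 h2]; split.
    by apply/eqP; move/eqP: h1; rewrite !mulf_eq0 (negbTE N0') orbF intr_eq0 orbF.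
  by move/eqP: h2; rewrite mulf_eq0 (negbTE M0') orbF => /eqP.
- rewrite /w1 /s1 !(mulZl hB) !(mulZr hB) !scalerA; congr (_ *: _); rewrite -[2%:R]/((2:int)%:~R); ring.
- rewrite /s1 /z1 !(mulZl hB) !(mulZr hB) hww !scalerA; congr (_ *: _); field; exact: M0'.
- by rewrite /z1 !(mulZl hB) !(mulZr hB) hzz !scaler0.
- by rewrite /w1 /z1 !(mulZl hB) !(mulZr hB) hwz !scaler0.
- by rewrite /w1 /z1 !(mulZl hB) !(mulZr hB) hzw !scaler0.
Qed.


Section Nil.
Variables (V : vectType rat) (mul : V -> V -> V) (one : V) (I : V -> Prop).
Hypothesis hB : bilinear_mul mul.
Hypothesis hU : unital_mul mul one.
Hypothesis hA : algebra_hyperbolic mul one.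
Hypothesis hN : nilpotent_ideal mul I.

Let hI : is_ideal mul I := proj1 hN.

Lemma indep_of (w z : V) : (forall c, w <> c *: z) -> z <> 0 -> indep w z.
Proof.
move=> Hw z0 a b E.
case: (eqVneq a 0) => [a0|a0].
  subst a; move: E; rewrite scale0r add0r => /eqP; rewrite scaler_eq0.
  by case/orP => /eqP.
exfalso; apply: (Hw (- b / a)); apply: (scalerI a0).
rewrite scalerA mulrCA mulfV // mulr1 scaleNr.
by apply/eqP; rewrite -addr_eq0 E.
Qed.

Lemma nil_big : exists n, forall m x, (n <= m)%N -> ideal_prod mul I m x -> x = 0.
Proof.
case: hN => _ [n [n0 Hn]]; exists n => m x nm Hx.
apply: Hn; apply: (ip_down hI Hx) => //.
Qed.

Lemma top m x : ideal_prod mul I m x -> x <> 0 -> exists k z, (m <= k)%N /\ ideal_prod mul I k z /\ z <> 0 /\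
   forall k' y, (k < k')%N -> ideal_prod mul I k' y -> y = 0.
Proof.
have [n Hn] := nil_big.
suff: forall d m x, (n - m <= d)%N -> ideal_prod mul I m x -> x <> 0 -> exists k z, (m <= k)%N /\ ideal_prod mul I k z /\ z <> 0 /\
   forall k' y, (k < k')%N -> ideal_prod mul I k' y -> y = 0.
  by move=> H; apply: (H (n - m)%N).
elim=> [|d IH] m0 x0 hd Hx x0n.
  by exfalso; apply: x0n; apply: (Hn m0) => //; lia.
case: (classic (exists k' y, (m0 < k')%N /\ ideal_prod mul I k' y /\ y <> 0)).
  move=> [k' [y [mk [Hy y0]]]].
  have kn : (k' < n)%N.
    by case: (ltnP k' n) => // nk; exfalso; apply: y0; apply: (Hn k').
  have [k [z [k'k [Hz [z0 Ht]]]]] := IH k' y ltac:(lia) Hy y0.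
  exists k, z; split; first lia.
  by split; [exact: Hz|split; [exact: z0|exact: Ht]].
move=> H; exists m0, x0; split; first exact: leqnn.
split; first exact: Hx. split; first exact: x0n. move=> k' y mk Hy.
by apply: NNPP => y0; apply: H; exists k', y.
Qed.

Lemma ip_inv k z : ideal_prod mul I k z -> (1 < k)%N -> exists i j p q, k = (i + j)%N /\
  ideal_prod mul I i p /\ ideal_prod mul I j q /\ z = mul p q.
Proof. by case=> [x _ //|i j x y Hx Hy _]; exists i, j, x, y. Qed.

Lemma nil_sq u v : I u -> I v -> mul u v = 0.
Proof.
move=> Iu Iv; apply: NNPP => uv0.
have H2 : ideal_prod mul I 2 (mul u v) by apply: (@ip_mul _ _ _ 1 1); constructor.
have [k [z [k2 [Hz [z0 Ht]]]]] := top H2 uv0.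
have [i [j [p [q [kij [Hp [Hq zpq]]]]]]] := ip_inv Hz k2.
have i0 := ip_pos Hp; have j0 := ip_pos Hq.
have [m [w [Hw [km Hwz]]]] : exists m w, ideal_prod mul I m w /\ (k <= m + m)%N /\ (forall c, w <> c *: z).
  case: (leqP j i) => ji.
    exists i, p; split; first exact: Hp. split; first lia. move=> c pc; apply: z0.
    rewrite zpq pc (mulZl hB) (Ht (k + j)%N (mul z q)) ?scaler0 //; first lia.
    exact: ip_mul.
  exists j, q; split; first exact: Hq. split; first lia. move=> c qc; apply: z0.
  rewrite zpq qc (mulZr hB) (Ht (i + k)%N (mul p z)) ?scaler0 //; first lia.
  exact: ip_mul.
have m0 := ip_pos Hw.
have indwz := indep_of Hwz z0.
have Ht2 := ip_mul Hw Hw.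
have zz : mul z z = 0 by apply: (Ht (k + k)%N) => //; [lia | exact: ip_mul].
case: (classic (indep (mul w w) z)) => indt.
  apply: (Z2_false hB hU hA indt (c := 0)) => //.
  - rewrite scale0r; apply: (Ht ((m + m) + (m + m))%N); [lia | exact: ip_mul].
  - apply: (Ht ((m + m) + k)%N); [lia | exact: ip_mul].
  - apply: (Ht (k + (m + m))%N); [lia | exact: ip_mul].
have [c hc] := dep_mult z0 indt.
apply: (Z2_false hB hU hA indwz hc) => //.
- apply: (Ht (m + k)%N); [lia | exact: ip_mul].
- apply: (Ht (k + m)%N); [lia | exact: ip_mul].
Qed.

Lemma nil_dep u v : I u -> I v -> ~ indep u v.
Proof.
move=> Iu Iv ind.
apply: (Z2_false hB hU hA ind (c := 0)); rewrite ?scale0r; exact: nil_sq.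
Qed.

End Nil.

Unset Implicit Arguments.

Lemma rad_zero (V : vectType rat) (mul : V -> V -> V) : bilinear_mul mul -> in_radical mul 0.
Proof.
move=> hB.
have hI : is_ideal mul (fun v => v = 0).
  split => //; split; first by move=> a x y -> ->; rewrite scaler0 addr0.
  by move=> a x ->; rewrite (bmul0l hB) (bmul0r hB).
exists (fun v => v = 0); split => //; split => //; exists 1%N; split => // x Hx.
exact: (ip_in hI Hx).
Qed.

Lemma rad_scale (V : vectType rat) (mul : V -> V -> V) x q : in_radical mul x -> in_radical mul (q *: x).
Proof.
move=> [I [hN Ix]]; exists I; split => //.
have := (proj1 (proj2 (proj1 hN))) q x 0 Ix (proj1 (proj1 hN)); by rewrite addr0.
Qed.

Theorem proposition2p2 (V : vectType rat) (mul : V -> V -> V) (one : V) :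
  bilinear_mul mul -> unital_mul mul one -> alternative_mul mul ->
  algebra_hyperbolic mul one ->
  (forall x y : V, in_radical mul x -> in_radical mul y -> mul x y = 0) /\
  exists j0 : V, in_radical mul j0 /\ mul j0 j0 = 0 /\
    (forall x : V, in_radical mul x <-> exists q : rat, x = q *: j0).
Proof.
move=> hB hU _ hA.
have key : forall x y, in_radical mul x -> in_radical mul y -> ~ indep x y.
  move=> x y [I [hNI Ix]] [J [hNJ Jy]] ind.
  have hI := proj1 hNI; have hJ := proj1 hNJ.
  have x0 : x <> 0.
    by move=> x0; have := ind 1 0; rewrite x0 scaler0 scale0r addr0 => /(_ erefl) [/eqP]; rewrite oner_eq0.
  have y0 : y <> 0.
    by move=> y0; have := ind 0 1; rewrite y0 scaler0 scale0r addr0 => /(_ erefl) [_ /eqP]; rewrite oner_eq0.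
  have xx := nil_sq hB hU hA hNI Ix Ix.
  have yy := nil_sq hB hU hA hNJ Jy Jy.
  have cross : forall a b, I a -> J b -> a <> 0 -> b <> 0 -> indep a b -> mul a b = 0 /\ mul b a = 0.
    move=> a b Ia Jb a0 b0 indab.
    have Iab := proj2 ((proj2 (proj2 hI)) b a Ia).
    have Jab := proj1 ((proj2 (proj2 hJ)) a b Jb).
    have Iba := proj1 ((proj2 (proj2 hI)) b a Ia).
    have Jba := proj2 ((proj2 (proj2 hJ)) a b Jb).
    have [al hal] := dep_mult a0 (nil_dep hB hU hA hNI Iab Ia).
    have [be hbe] := dep_mult b0 (nil_dep hB hU hA hNJ Jab Jb).
    have [al' hal'] := dep_mult a0 (nil_dep hB hU hA hNI Iba Ia).
    have [be' hbe'] := dep_mult b0 (nil_dep hB hU hA hNJ Jba Jb).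
    split.
      have [al0 _] : al = 0 /\ - be = 0 by apply: indab; rewrite scaleNr -hal -hbe subrr.
      by rewrite hal al0 scale0r.
    have [al0' _] : al' = 0 /\ - be' = 0 by apply: indab; rewrite scaleNr -hal' -hbe' subrr.
    by rewrite hal' al0' scale0r.
  have [xy yx] := cross x y Ix Jy x0 y0 ind.
  exact: (Z2_false hB hU hA ind (c := 0) ltac:(by rewrite scale0r) yy xy yx).
have prod0 : forall x y, in_radical mul x -> in_radical mul y -> mul x y = 0.
  move=> x y Rx Ry.
  case: (classic (y = 0)) => [->|y0]; first by rewrite (bmul0r hB).
  have [c ->] := dep_mult y0 (key x y Rx Ry).
  move: Ry => [J [hNJ Jy]].
  by rewrite (mulZl hB) (nil_sq hB hU hA hNJ Jy Jy) scaler0.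
split => //.
case: (classic (exists j, in_radical mul j /\ j <> 0)).
  move=> [j [Rj j0]]; exists j; split => //; split; first exact: prod0.
  move=> x; split.
    by move=> Rx; apply: dep_mult j0 (key x j Rx Rj).
  by move=> [q ->]; apply: rad_scale.
move=> H; exists 0; split; first exact: rad_zero.
split; first by rewrite (bmul0r hB).
move=> x; split.
  move=> Rx; exists 1; rewrite scaler0.
  by apply: NNPP => x0; apply: H; exists x.
by move=> [q ->]; rewrite scaler0; apply: rad_zero.
Qed.
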